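(* Let $p$ be an odd prime, $a,m\in\mathbb Z_p$ with $m\not\equiv0\pmod p$ and $a\not\equiv0,-1\pmod p$, and put $A_k=\binom ak\binom{-1-a}k\binom{2k}k$. Then $$2a(a+1)\sum_{k=0}^{p-2}\frac{A_k}{m^k(k+1)^2}\equiv(m-4)\sum_{k=0}^{p-1}\frac{kA_k}{m^k}+2\sum_{k=0}^{p-1}\frac{A_k}{m^k}+(4a(a+1)-2)\sum_{k=0}^{p-2}\frac{A_k}{m^k(k+1)}\pmod{p^3}$$ and $$2a(a+1)\sum_{k=0}^{p-2}\frac{A_k}{m^k(k+1)^3}\equiv-m+\Big(2m-8-\frac{m-4}{a(a+1)}\Big)\sum_{k=0}^{p-1}\frac{kA_k}{m^k}+\Big(m-\frac2{a(a+1)}\Big)\sum_{k=0}^{p-1}\frac{A_k}{m^k}+\Big(8a(a+1)-2+\frac2{a(a+1)}\Big)\sum_{k=0}^{p-2}\frac{A_k}{m^k(k+1)}\pmod{p^3}.$$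
   Context: $\mathbb Z_p$ denotes the set of rational numbers whose denominator is not divisible by $p$; for $u,v\in\mathbb Z_p$, $u\equiv v\pmod{p^r}$ means $(u-v)/p^r\in\mathbb Z_p$. For $a$ rational, $\binom a0=1$ and $\binom ak=\frac{a(a-1)\cdots(a-k+1)}{k!}$ for $k\ge1$. *)

(* Defs.v *)
From mathcomp Require Import all_boot all_order all_algebra.
Set Implicit Arguments. Unset Strict Implicit. Unset Printing Implicit Defensive.
Import Order.TTheory GRing.Theory Num.Theory.
Local Open Scope ring_scope.

Definition in_Zp (p : nat) (x : rat) : bool := ~~ (p %| `|denq x|)%N.

Definition congp (p r : nat) (u v : rat) : Prop :=
  in_Zp p ((u - v) / ((p ^ r)%N)%:R).

Definition binq (a : rat) (k : nat) : rat :=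
  (\prod_(i < k) (a - i%:R)) / (k`!)%:R.

Definition Ak (a : rat) (k : nat) : rat :=
  binq a k * binq (-1 - a) k * ('C(2 * k, k))%:R.

(* Main.v *)
Require Import Defs.
From mathcomp Require Import all_boot all_order all_algebra.
From mathcomp Require Import ring zify.
Import Order.TTheory GRing.Theory Num.Theory.
Local Open Scope ring_scope.
Set Implicit Arguments.
Unset Strict Implicit.

Section Zp.
Variable p : nat.
Hypothesis pP : prime p.

Lemma ZpP x : in_Zp p x <->
  exists n d : int, ~~ (p %| `|d|)%N /\ x = n%:~R / d%:~R.
Proof.
split.
  move=> H; exists (numq x), (denq x); split => //.
  by rewrite divq_num_den.
case=> n [d [Hd ->]].
rewrite /in_Zp.
set y := n%:~R / d%:~R.
have d0 : d != 0 by apply/eqP => d0; move: Hd; rewrite d0 dvdn0.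
have E : numq y * d = n * denq y.
  apply: (@intr_inj rat); rewrite !intrM.
  have := divq_num_den y; rewrite /y => Hy.
  have dq : (denq y)%:~R != 0 :> rat by rewrite intr_eq0 denq_neq0.
  have dd : d%:~R != 0 :> rat by rewrite intr_eq0.
  by apply/eqP; move/eqP: Hy; rewrite eqr_div.
have : (denq y %| d)%Z.
  rewrite -(@Gauss_dvdzr _ (numq y)); last first.
    by rewrite coprimez_sym coprimezE coprime_num_den.
  by rewrite E dvdz_mull.
rewrite dvdzE => Hdv; apply: contra Hd => Hp; exact: dvdn_trans Hdv.
Qed.

Lemma Zp_int (n : int) : in_Zp p n%:~R.
Proof. apply/ZpP; exists n, 1; split; last by rewrite divr1. rewrite absz1 dvdn1; apply: contraL (prime_gt1 pP) => /eqP ->; done. Qed.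

Lemma Zp_nat (n : nat) : in_Zp p n%:R.
Proof. by have := Zp_int n; rewrite pmulrn. Qed.

Lemma Zp_mul x y : in_Zp p x -> in_Zp p y -> in_Zp p (x * y).
Proof.
move=> /ZpP[n1 [d1 [H1 ->]]] /ZpP[n2 [d2 [H2 ->]]].
apply/ZpP; exists (n1 * n2), (d1 * d2); split.
  by rewrite abszM Euclid_dvdM // negb_or H1 H2.
by rewrite !intrM invfM; ring.
Qed.

Lemma Zp_add x y : in_Zp p x -> in_Zp p y -> in_Zp p (x + y).
Proof.
move=> /ZpP[n1 [d1 [H1 ->]]] /ZpP[n2 [d2 [H2 ->]]].
have d10 : d1 != 0 by apply/eqP => d0; move: H1; rewrite d0 dvdn0.
have d20 : d2 != 0 by apply/eqP => d0; move: H2; rewrite d0 dvdn0.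
apply/ZpP; exists (n1 * d2 + n2 * d1), (d1 * d2); split.
  by rewrite abszM Euclid_dvdM // negb_or H1 H2.
rewrite !intrD !intrM; field.
by rewrite !intr_eq0 d10 d20.
Qed.

Lemma Zp_opp x : in_Zp p x -> in_Zp p (- x).
Proof. by move=> H; rewrite -mulN1r; apply: Zp_mul => //; rewrite -[-1]/((-1)%:~R); apply: Zp_int. Qed.

Lemma Zp_sub x y : in_Zp p x -> in_Zp p y -> in_Zp p (x - y).
Proof. by move=> Hx Hy; apply: Zp_add => //; apply: Zp_opp. Qed.

Lemma Zp_exp x n : in_Zp p x -> in_Zp p (x ^+ n).
Proof.
move=> H; elim: n => [|n IH]; first by rewrite expr0; have := Zp_nat 1.
by rewrite exprS; apply: Zp_mul.
Qed.

Lemma Zp_prod (I : finType) (F : I -> rat) : (forall i, in_Zp p (F i)) ->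
  in_Zp p (\prod_i F i).
Proof.
move=> H; apply: (big_ind (fun x => in_Zp p x)) => //.
  by have := Zp_nat 1.
exact: Zp_mul.
Qed.

Lemma Zp_invn (n : nat) : ~~ (p %| n)%N -> in_Zp p (n%:R^-1).
Proof.
move=> H; apply/ZpP; exists 1, n; split => //.
by rewrite div1r pmulrn.
Qed.

Lemma Zp_inv x : in_Zp p x -> ~ in_Zp p (x / p%:R) -> in_Zp p x^-1.
Proof.
move=> /ZpP[n [d [Hd ->]]] Hn.
have [/dvdnP[k Hk]|nd] := boolP (p %| `|n|)%N.
  exfalso; apply: Hn; apply/ZpP.
  exists ((-1) ^+ (n < 0)%R * k%:Z), d; split => //.
  have En : n = (-1) ^+ (n < 0)%R * ((k * p)%N)%:Z.
    by rewrite -Hk -intEsign.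
  rewrite {1}En.
  have p0 : p%:R != 0 :> rat by rewrite pnatr_eq0 -lt0n prime_gt0.
  rewrite !intrM /= -!pmulrn natrM. field. apply/andP; split => //.
  by rewrite intr_eq0; apply/eqP => d0; move: Hd; rewrite d0 dvdn0.
apply/ZpP; exists d, n; split => //.
by rewrite invf_div.
Qed.


Lemma Zp_red x : in_Zp p x -> exists i, (i < p)%N /\ in_Zp p ((x - i%:R) / p%:R).
Proof.
move=> /ZpP[n [d [Hd ->]]].
have cop : coprimez d p.
  by rewrite coprimezE /= coprime_sym prime_coprime.
have [u [v Huv]] := Bezoutz d p.
move: cop; rewrite /coprimez => /eqP g1; rewrite g1 in Huv.
have pz0 : (p%:Z != 0) by rewrite eqz_nat -lt0n prime_gt0.
set r := ((n * u) %% p)%Z.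
have r0 : 0 <= r by apply: modz_ge0.
have rp : r < p by apply: ltz_pmod; rewrite ltz_nat prime_gt0.
exists `|r|%N; split; first by rewrite -ltz_nat gez0_abs.
have Er : (`|r|%N)%:R = r%:~R :> rat.
  by rewrite -[in RHS](gez0_abs r0).
set Q := ((n * u) %/ p)%Z.
have Ediv : r = n * u - Q * p by rewrite /r /Q {2}(divz_eq (n * u) p); ring.
have key : n - r * d = p%:Z * (Q * d + n * v).
  have E1 : n = n * (u * d + v * p) by rewrite Huv mulr1.
  rewrite {1}E1 Ediv; ring.
have d0 : d != 0 by apply/eqP => d0; move: Hd; rewrite d0 dvdn0.
apply/ZpP; exists (Q * d + n * v), d; split => //.
have : (n - r * d)%:~R = (p%:Z * (Q * d + n * v))%:~R :> rat by rewrite key.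
rewrite intrB !intrM /= -pmulrn => E.
rewrite Er.
have p0 : p%:R != 0 :> rat by rewrite pnatr_eq0 -lt0n prime_gt0.
have dd : d%:~R != 0 :> rat by rewrite intr_eq0.
apply: (@mulfI _ (p%:R * d%:~R)); first by rewrite mulf_neq0.
transitivity (n%:~R - r%:~R * d%:~R : rat); first by field; rewrite dd p0.
rewrite E; field; exact: dd.
Qed.

End Zp.

Lemma fact_ndvd p n : prime p -> (n < p)%N -> ~~ (p %| n`!)%N.
Proof.
move=> pP; elim: n => [|n IH] Hn; first by rewrite fact0 dvdn1 neq_ltn prime_gt1 ?orbT.
rewrite factS Euclid_dvdM // negb_or IH ?andbT; last by apply: ltnW.
apply/negP => /dvdn_leq => /(_ isT); lia.
Qed.

Lemma binC_dvd p : prime p -> (2 < p)%N -> (p %| 'C(2 * p.-1, p.-1))%N.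
Proof.
move=> pP p2.
have Hle : (p.-1 <= 2 * p.-1)%N by lia.
have := @bin_fact (2 * p.-1) p.-1 Hle.
have -> : (2 * p.-1 - p.-1 = p.-1)%N by lia.
move=> E.
have : (p %| (2 * p.-1)`!)%N by apply: dvdn_fact; apply/andP; split; lia.
rewrite -E Euclid_dvdM // Euclid_dvdM // (negPf (@fact_ndvd p p.-1 pP _)) ?orbF //; move: p2; case: (p) => //.
Qed.

Lemma binq_S a k : binq a k.+1 = binq a k * (a - k%:R) / k.+1%:R.
Proof.
rewrite /binq big_ord_recr /= factS natrM.
by field; rewrite addrC natr1 !pnatr_eq0 -!lt0n fact_gt0.
Qed.

Lemma binC k : ('C(2 * k, k))%:R = (2 * k)`!%:R / (k`!%:R) ^+ 2 :> rat.
Proof.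
have Hle : (k <= 2 * k)%N by lia.
have := @bin_fact (2 * k) k Hle.
have -> : (2 * k - k = k)%N by lia.
move=> E; rewrite -E !natrM; field.
by rewrite pnatr_eq0 -lt0n fact_gt0.
Qed.

Lemma Ak0 a : Ak a 0 = 1.
Proof. by rewrite /Ak /binq !big_ord0 fact0 muln0 bin0 !divr1. Qed.

Lemma Ak_S a k : Ak a k.+1 * (k.+1%:R) ^+ 3 =
  2 * (2 * k%:R + 1) * (k%:R * (k%:R + 1) - a * (a + 1)) * Ak a k.
Proof.
rewrite /Ak !binq_S !binC.
have -> : (2 * k.+1 = (2 * k).+2)%N by lia.
rewrite !factS.
by field; rewrite addrC natr1 !pnatr_eq0 -!lt0n fact_gt0.
Qed.

Lemma binq_val p a : prime p -> in_Zp p a -> ~ in_Zp p ((a + 1) / p%:R) ->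
  in_Zp p (binq a p.-1 / p%:R).
Proof.
move=> pP Ha Ha1.
have p0 : p%:R != 0 :> rat by rewrite pnatr_eq0 -lt0n prime_gt0.
have [i [ip Hi]] := Zp_red pP Ha.
have ip' : (i < p.-1)%N.
  have : i != p.-1.
    apply/eqP => Ei; apply: Ha1.
    have -> : (a + 1) / p%:R = (a - i%:R) / p%:R + 1.
      have E1 : (p.-1)%:R = p%:R - 1 :> rat.
        by rewrite -[in RHS](prednK (prime_gt0 pP)) -natr1 addrK.
      by rewrite Ei E1; field.
    apply: Zp_add => //; exact: (Zp_nat pP 1).
  move: ip; case: (p) => // n; rewrite /=; lia.
rewrite /binq (bigD1 (Ordinal ip')) //=.
have -> : (a - i%:R) * (\prod_(j < p.-1 | j != Ordinal ip') (a - j%:R)) / (p.-1)`!%:R / p%:R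
  = ((a - i%:R) / p%:R) * (\prod_(j < p.-1 | j != Ordinal ip') (a - j%:R)) * ((p.-1)`!%:R)^-1.
  by field; rewrite p0 pnatr_eq0 -lt0n fact_gt0.
apply: Zp_mul => //; last first.
  by apply: Zp_invn => //; apply: fact_ndvd => //; rewrite prednK ?prime_gt0.
apply: Zp_mul => //.
apply: (big_ind (fun x => in_Zp p x)); first exact: (Zp_nat pP 1).
  exact: Zp_mul.
move=> j _; apply: Zp_sub => //; exact: Zp_nat.
Qed.

Lemma E1k (a m : rat) (k : nat) : m != 0 ->
  m * ((k.+1)%:R * Ak a k.+1 / m ^+ k.+1) =
  4 * (k%:R * Ak a k / m ^+ k) - 2 * (Ak a k / m ^+ k)
  + 2 * (1 - 2 * (a * (a + 1))) * (Ak a k / (m ^+ k * k.+1%:R))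
  + 2 * (a * (a + 1)) * (Ak a k / (m ^+ k * (k.+1%:R) ^+ 2)).
Proof.
move=> m0.
have k0 : k.+1%:R != 0 :> rat by rewrite pnatr_eq0.
have E : Ak a k.+1 = 2 * (2 * k%:R + 1) * (k%:R * (k%:R + 1) - a * (a + 1)) * Ak a k
   / (k.+1%:R) ^+ 3.
  by rewrite -Ak_S mulfK // expf_neq0.
rewrite E [m ^+ k.+1]exprSr.
have Mk : m ^+ k != 0 by rewrite expf_neq0.
by field; rewrite addrC natr1 k0 Mk m0.
Qed.

Lemma E2k (a m : rat) (k : nat) : m != 0 ->
  m * (Ak a k.+1 / m ^+ k.+1) =
  4 * (Ak a k / m ^+ k) - 6 * (Ak a k / (m ^+ k * k.+1%:R))
  + 2 * (1 - 2 * (a * (a + 1))) * (Ak a k / (m ^+ k * (k.+1%:R) ^+ 2))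
  + 2 * (a * (a + 1)) * (Ak a k / (m ^+ k * (k.+1%:R) ^+ 3)).
Proof.
move=> m0.
have k0 : k.+1%:R != 0 :> rat by rewrite pnatr_eq0.
have E : Ak a k.+1 = 2 * (2 * k%:R + 1) * (k%:R * (k%:R + 1) - a * (a + 1)) * Ak a k
   / (k.+1%:R) ^+ 3.
  by rewrite -Ak_S mulfK // expf_neq0.
rewrite E [m ^+ k.+1]exprSr.
have Mk : m ^+ k != 0 by rewrite expf_neq0.
by field; rewrite addrC natr1 k0 Mk m0.
Qed.

Lemma sums_ident (a m : rat) (q : nat) : m != 0 -> a != 0 -> a + 1 != 0 ->
  let X := Ak a q / m ^+ q in
  let S0 := \sum_(0 <= k < q.+1) Ak a k / m ^+ k in
  let S1 := \sum_(0 <= k < q.+1) k%:R * Ak a k / m ^+ k in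
  let T1 := \sum_(0 <= k < q) Ak a k / (m ^+ k * k.+1%:R) in
  let T2 := \sum_(0 <= k < q) Ak a k / (m ^+ k * (k.+1%:R) ^+ 2) in
  let T3 := \sum_(0 <= k < q) Ak a k / (m ^+ k * (k.+1%:R) ^+ 3) in
  m * S1 = 4 * (S1 - q%:R * X) - 2 * (S0 - X) + 2 * (1 - 2 * (a * (a + 1))) * T1
           + 2 * (a * (a + 1)) * T2 /\
  m * (S0 - 1) = 4 * (S0 - X) - 6 * T1 + 2 * (1 - 2 * (a * (a + 1))) * T2
           + 2 * (a * (a + 1)) * T3.
Proof.
move=> m0 a0 a10 X S0 S1 T1 T2 T3.
have hS1 : S1 = \sum_(0 <= k < q) (k.+1)%:R * Ak a k.+1 / m ^+ k.+1.
  by rewrite /S1 big_nat_recl // mul0r mul0r add0r.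
have hS1' : \sum_(0 <= k < q) k%:R * Ak a k / m ^+ k = S1 - q%:R * X.
  by rewrite /S1 big_nat_recr //= /X mulrA addrK.
have hS0 : S0 = 1 + \sum_(0 <= k < q) Ak a k.+1 / m ^+ k.+1.
  by rewrite /S0 big_nat_recl // Ak0 expr0 divr1.
have hS0' : \sum_(0 <= k < q) Ak a k / m ^+ k = S0 - X.
  by rewrite /S0 big_nat_recr //= addrK.
split.
  rewrite {1}hS1 mulr_sumr.
  rewrite (eq_bigr _ (fun k _ => E1k a k m0)).
  by rewrite !big_split /= sumrN -!mulr_sumr hS1' hS0'.
have -> : S0 - 1 = \sum_(0 <= k < q) Ak a k.+1 / m ^+ k.+1 by rewrite hS0 addrC addKr.
rewrite mulr_sumr.
rewrite (eq_bigr _ (fun k _ => E2k a k m0)).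
by rewrite !big_split /= sumrN -!mulr_sumr hS0'.
Qed.

Lemma val3 p a : prime p -> (2 < p)%N -> in_Zp p a -> ~ in_Zp p (a / p%:R) ->
  ~ in_Zp p ((a + 1) / p%:R) -> in_Zp p (Ak a p.-1 / ((p ^ 3)%N)%:R).
Proof.
move=> pP p2 Ha Ha0 Ha1.
have p0 : p%:R != 0 :> rat by rewrite pnatr_eq0 -lt0n prime_gt0.
have V1 := binq_val pP Ha Ha1.
have V2 : in_Zp p (binq (-1 - a) p.-1 / p%:R).
  apply: binq_val => //.
    by apply: (Zp_sub pP) => //; exact: (Zp_nat pP 1).
  move=> H; apply: Ha0.
  have -> : a / p%:R = - ((-1 - a + 1) / p%:R) by field.
  exact: (Zp_opp pP).
have EC := divnK (binC_dvd pP p2).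
rewrite /Ak -EC natrM natrX.
have -> : binq a p.-1 * binq (-1 - a) p.-1 * (('C(2 * p.-1, p.-1) %/ p)%:R * p%:R)
   / p%:R ^+ 3 = (binq a p.-1 / p%:R) * (binq (-1 - a) p.-1 / p%:R)
     * ('C(2 * p.-1, p.-1) %/ p)%:R by field.
by apply: (Zp_mul pP); [apply: (Zp_mul pP)|apply: (Zp_nat pP)].
Qed.

Unset Implicit Arguments.
Set Strict Implicit.

Theorem theorem4p1 (p : nat) (a m : rat) :
  prime p -> odd p ->
  in_Zp p a -> in_Zp p m ->
  ~ congp p 1 m 0 -> ~ congp p 1 a 0 -> ~ congp p 1 a (-1) ->
  congp p 3
    (2 * a * (a + 1) *
       \sum_(0 <= k < p.-1) Ak a k / (m ^+ k * (k.+1%:R) ^+ 2))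
    ((m - 4) * \sum_(0 <= k < p) k%:R * Ak a k / m ^+ k
     + 2 * \sum_(0 <= k < p) Ak a k / m ^+ k
     + (4 * a * (a + 1) - 2) *
         \sum_(0 <= k < p.-1) Ak a k / (m ^+ k * k.+1%:R))
  /\
  congp p 3
    (2 * a * (a + 1) *
       \sum_(0 <= k < p.-1) Ak a k / (m ^+ k * (k.+1%:R) ^+ 3))
    (- m
     + (2 * m - 8 - (m - 4) / (a * (a + 1))) *
         \sum_(0 <= k < p) k%:R * Ak a k / m ^+ k
     + (m - 2 / (a * (a + 1))) * \sum_(0 <= k < p) Ak a k / m ^+ k
     + (8 * a * (a + 1) - 2 + 2 / (a * (a + 1))) *
         \sum_(0 <= k < p.-1) Ak a k / (m ^+ k * k.+1%:R)).
Proof.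
move=> pP podd Ha Hm Hm0 Ha0 Ha1.
move: Hm0 Ha0; rewrite /congp expn1 !subr0 => Hm0 Ha0.
rewrite /congp expn1 opprK in Ha1.
have p2 : (2 < p)%N.
  have := prime_gt1 pP; rewrite leq_eqVlt => /orP [/eqP E|//].
  by rewrite -E in podd.
have p0 : p%:R != 0 :> rat by rewrite pnatr_eq0 -lt0n prime_gt0.
have a0 : a != 0 by apply/eqP => E; apply: Ha0; rewrite E mul0r; exact: (Zp_nat pP 0).
have m0 : m != 0 by apply/eqP => E; apply: Hm0; rewrite E mul0r; exact: (Zp_nat pP 0).
have a10 : a + 1 != 0 by apply/eqP => E; apply: Ha1; rewrite E mul0r; exact: (Zp_nat pP 0).
have ia : in_Zp p a^-1 := Zp_inv pP Ha Ha0.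
have im : in_Zp p m^-1 := Zp_inv pP Hm Hm0.
have Ha1p : in_Zp p (a + 1) by apply: (Zp_add pP) => //; exact: (Zp_nat pP 1).
have ia1 : in_Zp p (a + 1)^-1 := Zp_inv pP Ha1p Ha1.
have V := val3 pP p2 Ha Ha0 Ha1.
move: V; rewrite /congp.
have [q Hq] : exists q, p = q.+1 by exists p.-1; rewrite prednK // prime_gt0.
rewrite Hq /= => V.
have [H1 H2] := sums_ident q m0 a0 a10.
move: H1 H2.
set X := Ak a q / m ^+ q.
set S0 := \sum_(0 <= k < q.+1) Ak a k / m ^+ k.
set S1 := \sum_(0 <= k < q.+1) k%:R * Ak a k / m ^+ k.
set T1 := \sum_(0 <= k < q) Ak a k / (m ^+ k * k.+1%:R).
set T2 := \sum_(0 <= k < q) Ak a k / (m ^+ k * (k.+1%:R) ^+ 2).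
set T3 := \sum_(0 <= k < q) Ak a k / (m ^+ k * (k.+1%:R) ^+ 3).
move=> H1 H2.
rewrite -Hq in V *.
have x0 : a * (a + 1) != 0 by rewrite mulf_neq0.
have hT2 : T2 = (m * S1 - (4 * (S1 - q%:R * X) - 2 * (S0 - X)
    + 2 * (1 - 2 * (a * (a + 1))) * T1)) / (2 * (a * (a + 1))).
  by rewrite H1; field; rewrite ?a0 ?a10 ?m0 ?p0.
have hT3 : T3 = (m * (S0 - 1) - (4 * (S0 - X) - 6 * T1
    + 2 * (1 - 2 * (a * (a + 1))) * T2)) / (2 * (a * (a + 1))).
  by rewrite H2; field; rewrite ?a0 ?a10 ?m0 ?p0.
have EX : X = Ak a q * (m^-1) ^+ q by rewrite /X exprVn.
clearbody S0 S1 T1 T2 T3.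
have Zc1 : in_Zp p (4 * q%:R - 2).
  by apply: (Zp_sub pP); [apply: (Zp_mul pP); apply: (Zp_nat pP)|apply: (Zp_nat pP 2)].
have fin : forall c, in_Zp p c -> in_Zp p (c * X / ((p ^ 3)%N)%:R).
  move=> c Hc; rewrite EX.
  have -> : c * (Ak a q * m^-1 ^+ q) / ((p ^ 3)%N)%:R
     = c * m^-1 ^+ q * (Ak a q / ((p ^ 3)%N)%:R) by ring.
  apply: (Zp_mul pP) => //; apply: (Zp_mul pP) => //; exact: (Zp_exp pP).
split.
  have -> : 2 * a * (a + 1) * T2 - ((m - 4) * S1 + 2 * S0 + (4 * a * (a + 1) - 2) * T1)
     = (4 * q%:R - 2) * X by rewrite hT2; field; rewrite ?a0 ?a10 ?m0 ?p0.
  exact: fin.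
have -> : 2 * a * (a + 1) * T3 -
      (- m + (2 * m - 8 - (m - 4) / (a * (a + 1))) * S1 +
       (m - 2 / (a * (a + 1))) * S0 +
       (8 * a * (a + 1) - 2 + 2 / (a * (a + 1))) * T1)
    = (4 + (2 - (a * (a + 1))^-1) * (4 * q%:R - 2)) * X.
  by rewrite hT3 hT2; field; rewrite ?a0 ?a10 ?m0 ?p0.
apply: fin.
apply: (Zp_add pP); first exact: (Zp_nat pP 4).
apply: (Zp_mul pP) => //.
apply: (Zp_sub pP); first exact: (Zp_nat pP 2).
by rewrite invfM; apply: (Zp_mul pP).
Qed.
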